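(* Let $G$ be a finite group of even order and let $\mathcal{F}$ be a $1$-rotational $k$-factorization of $K_{\overline{G}}$. Then $k$ is even, and every involution of $G$ lies in the $G$-stabilizer of some factor $F\in\mathcal{F}$.
   Context: For a finite group $G$, $\overline{G}=G\cup\{\infty\}$, and $K_V$ denotes the complete graph on vertex set $V$. $G$ acts on $\overline{G}$ by right multiplication, with $\infty g=\infty$ for all $g\in G$; for a subgraph $F$ of $K_{\overline{G}}$ and $g\in G$, $Fg$ is the graph obtained by replacing every vertex $v$ by $vg$. A $k$-factor of $K_V$ is a spanning $k$-regular subgraph, and a $k$-factorization is a set of $k$-factors whose edge sets partition the edge set of $K_V$. A $k$-factorization $\mathcal{F}$ of $K_{\overline{G}}$ is $1$-rotational if $Fg\in\mathcal{F}$ for all $F\in\mathcal{F}$ and $g\in G$. The $G$-stabilizer of a factor $F$ is $\{g\in G: Fg=F\}$. An involution is an element of order $2$. *)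

(* Defs.v *)
From mathcomp Require Import all_boot all_fingroup.
Set Implicit Arguments. Unset Strict Implicit. Unset Printing Implicit Defensive.
Local Open Scope group_scope.

(* Vertex set of K_{overline G}: G ∪ {∞} is encoded as option gT, None = ∞. *)


Definition vact (gT : finGroupType) (v : option gT) (g : gT) : option gT :=
  match v with None => None | Some x => Some (x * g) end.

(* A (spanning) subgraph of K_V is given by its edge set: a set of 2-subsets of V. *)
Definition is_edge (gT : finGroupType) (e : {set option gT}) : bool := #|e| == 2.

Definition deg (gT : finGroupType) (F : {set {set option gT}}) (v : option gT) : nat :=
  #|[set e in F | v \in e]|.

Definition is_kfactor (gT : finGroupType) (k : nat) (F : {set {set option gT}}) : Prop :=
  (forall e, e \in F -> is_edge e) /\ (forall v, deg F v = k).

Definition is_kfactorization (gT : finGroupType) (k : nat)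
    (FF : {set {set {set option gT}}}) : Prop :=
  (forall F, F \in FF -> is_kfactor k F) /\
  (forall e : {set option gT}, is_edge e ->
     exists! F, F \in FF /\ e \in F).

Definition gtrans (gT : finGroupType) (F : {set {set option gT}}) (g : gT)
  : {set {set option gT}} :=
  [set [set vact v g | v in e] | e : {set option gT} in F].

Definition one_rotational (gT : finGroupType) (FF : {set {set {set option gT}}}) : Prop :=
  forall F g, F \in FF -> gtrans F g \in FF.

Definition Gstab (gT : finGroupType) (F : {set {set option gT}}) : {set gT} :=
  [set g : gT | gtrans F g == F].

(* Main.v *)
Require Import Defs.
From mathcomp Require Import all_boot all_fingroup.

Lemma handshake (gT : finGroupType) (F : {set {set option gT}}) :
  (forall e, e \in F -> is_edge e) ->
  \sum_(v : option gT) deg F v = 2 * #|F|.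
Proof.
move=> He; rewrite /deg.
transitivity (\sum_(v : option gT) \sum_(e in F) (v \in e : nat)).
  apply: eq_bigr => v _.
  rewrite -sum1_card big_mkcond [RHS]big_mkcond /=.
  apply: eq_bigr => e _; rewrite inE; by case: (e \in F); case: (v \in e).
rewrite exchange_big /= -[#|F|]sum1_card big_distrr /=.
apply: eq_bigr => e eF.
have := He e eF; rewrite /is_edge => /eqP <-.
rewrite muln1 -sum1_card [RHS]big_mkcond /=.
by apply: eq_bigr => v _; case: (v \in e).
Qed.

Theorem lemma2p4 (gT : finGroupType) (k : nat) (FF : {set {set {set option gT}}}) :
  ~~ odd #|[set: gT]| ->
  is_kfactorization k FF -> one_rotational FF ->
  ~~ odd k /\
  (forall x : gT, #[x]%g = 2 -> exists2 F, F \in FF & x \in Gstab F).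
Proof.
move=> Hev [Hf Hu] Hrot; split.
  have e0 : is_edge [set None; Some (1%g : gT)].
    by rewrite /is_edge cards2.
  have [F [[FF_F _] _]] := Hu _ e0.
  have [Fe Fd] := Hf F FF_F.
  have := @handshake gT F Fe.
  under eq_bigr => v _ do rewrite Fd.
  rewrite sum_nat_const card_option => /(congr1 odd).
  rewrite cardsT in Hev; rewrite !oddM /=.
  by move: Hev; case: (odd k); case: (odd #|gT|).
move=> x Hx.
have x1 : x != 1%g by apply/eqP => x1; rewrite x1 order1 in Hx.
have xx : (x * x = 1)%g by rewrite -[(x * x)%g]/(x ^+ 2)%g -Hx expg_order.
set e := [set Some (1%g : gT); Some x].
have ee : is_edge e.
  have hne : Some (1%g : gT) != Some x by apply: contra x1 => /eqP[->].
  by rewrite /is_edge cards2 hne.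
have [F [[FF_F eF] uF]] := Hu _ ee.
exists F => //.
rewrite inE; apply/eqP; symmetry; apply: uF; split; first exact: Hrot.
apply/imsetP; exists e => //.
apply/setP => v; apply/idP/imsetP.
  rewrite !inE => /orP[] /eqP ->.
    by exists (Some x); rewrite ?inE ?eqxx ?orbT //= xx.
  by exists (Some 1%g); rewrite ?inE ?eqxx //= mul1g.
case=> w; rewrite !inE => /orP[] /eqP -> ->; rewrite /= ?mul1g ?xx eqxx //.
by rewrite orbT.
Qed.
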